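(* Let $G=(V,E)$ be a transitive and finite directed graph with in-degree at least $2$ at every vertex, and let $\widehat{G}=(\widehat{V},\widehat{E})$ be the graph obtained by repeatedly applying a $v$-lag at every vertex $v$ of in-degree at least $3$. Then $\widehat{G}$ is in-degree $2$-regular, and there is an embedding $V\subseteq\widehat{V}$ which extends to a bijection $\theta$ from the set $E^\bullet$ of finite paths of $G$ onto the set of finite paths in $\widehat{G}$ whose range and source lie in $V$.
   Context: A directed graph $G=(V,E,r,s)$; in-degree of $v$ is $|r^{-1}(v)|$; in-degree $2$-regular means every vertex has in-degree exactly $2$. Paths $e_1\cdots e_n$ satisfy $s(e_i)=r(e_{i+1})$, vertices are paths of length $0$; ''edge from $u$ to $w$'' has source $u$, range $w$; transitive means there is a path between any two vertices. The $v$-lag at a vertex $v$ of in-degree $d_v\ge3$: enumerate the edges with range $v$ as $e_0,\dots,e_{d_v-1}$ with sources $u_0,\dots,u_{d_v-1}$; keep all other vertices and edges; add vertices $v_1,\dots,v_{d_v-2}$, an edge $f_1$ from $v_1$ to $v$, edges $f_i$ from $v_i$ to $v_{i-1}$ ($2\le i\le d_v-2$); replace $e_0$ by $\hat e_0$ from $u_0$ to $v$, $e_j$ by $\hat e_j$ from $u_j$ to $v_j$ ($1\le j\le d_v-2$), $e_{d_v-1}$ by $\hat e_{d_v-1}$ from $u_{d_v-1}$ to $v_{d_v-2}$. Only edges into $v$ change, so lags at different vertices commute. The map $\theta$ at one lag sends vertices to themselves, edges not into $v$ to themselves, $e_j$ to the path $f_1\cdots f_j\hat e_j$ (with $f_1\cdots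 f_{d_v-2}\hat e_{d_v-1}$ for $j=d_v-1$ and $\hat e_0$ for $j=0$), extended to paths by concatenation; the $\theta$ for $\widehat{G}$ is the composite of these maps. *)

(* Defs.v *)
From mathcomp Require Import all_boot.
Set Implicit Arguments. Unset Strict Implicit. Unset Printing Implicit Defensive.

(* A path e_1 ... e_n (s e_i = r e_{i+1}) is encoded as a pair (v, [:: e_1; ...; e_n])
   where v is its range vertex (so r e_1 = v); a vertex v is the length-0 path (v, [::]). *)
Section Paths.
Variables (V E : eqType) (r s : E -> V).

Definition is_gpath (p : V * seq E) : bool :=
  match p.2 with
  | [::] => true
  | e :: es => (r e == p.1) && path (fun e1 e2 => s e1 == r e2) e es
  end.

Definition prange (p : V * seq E) : V := p.1.
Definition psource (p : V * seq E) : V := last p.1 (map s p.2).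
End Paths.

Section Graph.
Variables (V E : finType) (r : E -> V).
Definition indeg (v : V) : nat := #|[pred e | r e == v]|.
End Graph.

Definition transitive_graph (V E : finType) (r s : E -> V) : Prop :=
  forall u w : V, exists p, is_gpath r s p /\ prange p = u /\ psource s p = w.

(* The lagged graph \hat G (all lags applied simultaneously; they commute).
   [idx e] is the position of e in the chosen enumeration e_0,...,e_{d-1} of the
   edges with range r e.
   Vertices: (v, 0) is v itself, (v, k) for 1 <= k <= d_v - 2 is v_k.
   Edges: inl e is \hat e; inr (v, i) is f_{i+1} (from v_{i+1} to v_i, v_0 = v). *)
Section Lag.
Variables (V E : finType) (r s : E -> V) (idx : E -> nat).

Definition lagV : finType := {v : V & 'I_(indeg r v - 2).+1}.
Definition lagE : finType := (E + {v : V & 'I_(indeg r v - 2)})%type.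

Definition lag_emb (v : V) : lagV := existT _ v ord0.

Definition lag_r (x : lagE) : lagV :=
  match x with
  | inl e => existT (fun v => 'I_(indeg r v - 2).+1) (r e)
                    (inord (minn (idx e) (indeg r (r e) - 2)))
  | inr (existT v i) => existT (fun v => 'I_(indeg r v - 2).+1) v (widen_ord (leqnSn _) i)
  end.

Definition lag_s (x : lagE) : lagV :=
  match x with
  | inl e => lag_emb (s e)
  | inr (existT v i) => existT (fun v => 'I_(indeg r v - 2).+1) v (lift ord0 i)
  end.

(* theta(e_j) = f_1 ... f_k \hat e_j with k = min(j, d_v - 2). *)
Definition theta_edge (e : E) : seq lagE :=
  [seq inr (existT (fun v => 'I_(indeg r v - 2)) (r e) i)
    | i <- [seq j <- enum 'I_(indeg r (r e) - 2)
             | (nat_of_ord j < minn (idx e) (indeg r (r e) - 2))%N]]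
  ++ [:: inl e].

Definition theta (p : V * seq E) : lagV * seq lagE :=
  (lag_emb p.1, flatten (map theta_edge p.2)).
End Lag.

Arguments lag_r [V E] r idx x.
Arguments lag_s [V E] r s x.

(* Main.v *)
Require Import Defs.
From mathcomp Require Import all_boot.
Set Implicit Arguments. Unset Strict Implicit. Unset Printing Implicit Defensive.

Definition codeV (V E : finType) (r : E -> V) (x : lagV r) : V * nat :=
  (projT1 x, nat_of_ord (projT2 x)).

Definition codeE (V E : finType) (r : E -> V) (y : lagE r) : E + (V * nat) :=
  match y with
  | inl e => inl e
  | inr (existT v i) => inr (v, nat_of_ord i)
  end.

Definition Rc (V E : finType) (r : E -> V) (idx : E -> nat) (y : E + (V * nat)) : V * nat :=
  match y with
  | inl e => (r e, minn (idx e) (indeg r (r e) - 2))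
  | inr p => p
  end.

Definition Sc (V E : finType) (s : E -> V) (y : E + (V * nat)) : V * nat :=
  match y with
  | inl e => (s e, 0)
  | inr p => (p.1, p.2.+1)
  end.

Definition thetaC (V E : finType) (r : E -> V) (idx : E -> nat) (e : E) : seq (E + (V * nat)) :=
  [seq inr (r e, i) | i <- iota 0 (minn (idx e) (indeg r (r e) - 2))] ++ [:: inl e].

Lemma codeV_inj (V E : finType) (r : E -> V) : injective (@codeV V E r).
Proof.
case=> v1 i1 [v2 i2]; rewrite /codeV /= => -[ev ei]; subst v2.
by congr existT; apply: val_inj.
Qed.

Lemma codeE_inj (V E : finType) (r : E -> V) : injective (@codeE V E r).
Proof.
case=> [e1|[v1 i1]] [e2|[v2 i2]] //=; first by move=> [->].
move=> [ev ei]; subst v2; congr inr; congr existT; exact: val_inj.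
Qed.

Lemma codeV_r (V E : finType) (r : E -> V) idx (y : lagE r) :
  codeV (lag_r r idx y) = Rc r idx (codeE y).
Proof.
case: y => [e|[v i]] //=; rewrite /codeV /= inordK //.
by rewrite ltnS geq_minr.
Qed.

Lemma codeV_s (V E : finType) (r s : E -> V) (y : lagE r) :
  codeV (lag_s r s y) = Sc s (codeE y).
Proof. by case: y => [e|[v i]]. Qed.

Lemma gpath_code (V E : finType) (r s : E -> V) idx (x : lagV r) (l : seq (lagE r)) :
  is_gpath (lag_r r idx) (lag_s r s) (x, l) =
  is_gpath (Rc r idx) (Sc s) (codeV x, map (@codeE V E r) l).
Proof.
case: l => [|a l] //=; rewrite /is_gpath /= path_map -codeV_r (inj_eq (@codeV_inj _ _ r)).
congr andb; apply: eq_path => y z /=.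
by rewrite -codeV_r -codeV_s (inj_eq (@codeV_inj _ _ r)).
Qed.

Lemma psource_code (V E : finType) (r s : E -> V) (x : lagV r) (l : seq (lagE r)) :
  codeV (psource (lag_s r s) (x, l)) = psource (Sc s) (codeV x, map (@codeE V E r) l).
Proof.
rewrite /psource /= -map_comp.
have -> : map (Sc s \o (@codeE V E r)) l = map (@codeV V E r \o lag_s r s) l.
  by apply: eq_map => y /=; rewrite codeV_s.
by rewrite map_comp last_map.
Qed.

Lemma theta_code (V E : finType) (r : E -> V) idx (e : E) :
  map (@codeE V E r) (theta_edge r idx e) = thetaC r idx e.
Proof.
rewrite /theta_edge /thetaC map_cat /= -map_comp; congr (_ ++ _).
set m := indeg r (r e) - 2; set k := minn _ _.
have km : k <= m by rewrite geq_minr.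
rewrite -(filter_iota_ltn 0 km) -val_enum_ord filter_map -!map_comp.
by apply: eq_map.
Qed.

Lemma gpath_cons (V E : eqType) (r s : E -> V) x a L :
  is_gpath r s (x, a :: L) = (r a == x) && is_gpath r s (s a, L).
Proof. by case: L => [|b L]; rewrite /is_gpath /= ?andbT // (eq_sym (s a)). Qed.

Lemma psource_cons (V E : eqType) (s : E -> V) x a L :
  psource s (x, a :: L) = psource s (s a, L).
Proof. by []. Qed.

Lemma gpath_cat (V E : eqType) (r s : E -> V) L1 x L2 :
  is_gpath r s (x, L1) -> is_gpath r s (psource s (x, L1), L2) ->
  is_gpath r s (x, L1 ++ L2).
Proof.
elim: L1 x => [|a L1 IH] x //= .
rewrite !gpath_cons psource_cons => /andP[-> h1] h2 /=; exact: IH.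
Qed.

Lemma psource_cat (V E : eqType) (s : E -> V) L1 x L2 :
  psource s (x, L1 ++ L2) = psource s (psource s (x, L1), L2).
Proof. by elim: L1 x => [|a L1 IH] x //=; rewrite !psource_cons IH. Qed.

Definition kk (V E : finType) (r : E -> V) (idx : E -> nat) (e : E) :=
  minn (idx e) (indeg r (r e) - 2).

Lemma thetaC_piece (V E : finType) (r s : E -> V) idx e n j :
  j + n = kk r idx e ->
  is_gpath (Rc r idx) (Sc s) ((r e, j), [seq inr (r e, i) | i <- iota j n] ++ [:: inl e]) /\
  psource (Sc s) ((r e, j), [seq inr (r e, i) | i <- iota j n] ++ [:: inl e]) = (s e, 0).
Proof.
elim: n j => [|n IH] j /=.
  rewrite addn0 /kk => ->; rewrite gpath_cons /= eqxx; split=> //.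
move=> h; rewrite gpath_cons psource_cons /= eqxx /=.
by apply: IH; rewrite addSnnS.
Qed.

Lemma forward (V E : finType) (r s : E -> V) idx d u :
  is_gpath r s (u, d) ->
  is_gpath (Rc r idx) (Sc s) ((u, 0), flatten (map (thetaC r idx) d)) /\
  psource (Sc s) ((u, 0), flatten (map (thetaC r idx) d)) = (psource s (u, d), 0).
Proof.
elim: d u => [|e d IH] u //=.
rewrite gpath_cons psource_cons => /andP[/eqP <- hd].
have [h1 h2] := @thetaC_piece _ _ r s idx e (kk r idx e) 0 (erefl _).
have [h3 h4] := IH _ hd.
split; first by apply: gpath_cat; rewrite /thetaC -/(kk r idx e) ?h2.
by rewrite psource_cat /thetaC -/(kk r idx e) h2.
Qed.

Definition getl (A B : Type) (y : A + B) : option A :=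
  if y is inl e then Some e else None.

Lemma backward (V E : finType) (r s : E -> V) idx L v j :
  is_gpath (Rc r idx) (Sc s) ((v, j), L) -> (psource (Sc s) ((v, j), L)).2 = 0 ->
  is_gpath r s (v, pmap (@getl _ _) L) /\
  L = drop j (flatten (map (thetaC r idx) (pmap (@getl _ _) L))) /\
  (match pmap (@getl _ _) L with [::] => j = 0 | e :: _ => j <= kk r idx e end).
Proof.
elim: L v j => [|[e|[w i]] L IH] v j.
- by move=> _ /= ->.
- rewrite gpath_cons psource_cons /= => /andP[/eqP[re je] hL] hs.
  have [h1 [h2 _]] := IH _ _ hL hs.
  split; first by rewrite gpath_cons re eqxx.
  split; last by rewrite -je.
  rewrite /= /thetaC -catA /= drop_size_cat; last by rewrite size_map size_iota.
  by congr cons; rewrite drop0 in h2.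
- rewrite (gpath_cons (Rc r idx) (Sc s) (v, j) (inr (w, i)) L).
  rewrite psource_cons /= => /andP[/eqP[-> ->] hL] hs.
  have [h1 [h2 h3]] := IH _ _ hL hs.
  move: h1 h2 h3; case: (pmap _ L) => [|e d] //= h1 h2 h3.
  split => //; split => //.
  move: h1; rewrite gpath_cons => /andP[/eqP re _].
  rewrite (drop_nth (inl e)); last first.
    by rewrite /thetaC -catA size_cat size_map size_iota -/(kk r idx e); apply: leq_trans h3 (leq_addr _ _).
  rewrite -h2 /thetaC -catA nth_cat size_map size_iota -/(kk r idx e) h3.
  by rewrite (nth_map 0) ?size_iota // nth_iota // re add0n.
by apply: ltnW.
Qed.

Lemma idx_surj (V E : finType) (r : E -> V) (idx : E -> nat) :
  (forall e, idx e < indeg r (r e)) ->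
  (forall e1 e2, r e1 = r e2 -> idx e1 = idx e2 -> e1 = e2) ->
  forall v k, k < indeg r v -> exists e, r e = v /\ idx e = k.
Proof.
move=> hlt hinj v k hk.
set s1 := map idx (enum [pred e | r e == v]).
have u1 : uniq s1.
  rewrite map_inj_in_uniq ?enum_uniq // => e1 e2.
  rewrite !mem_enum !inE => /eqP h1 /eqP h2 hi; apply: hinj => //; by rewrite h1 h2.
have sub1 : {subset s1 <= iota 0 (indeg r v)}.
  move=> n /mapP[e]; rewrite mem_enum inE => /eqP <- ->.
  by rewrite mem_iota add0n hlt.
have sz : size (iota 0 (indeg r v)) <= size s1 by rewrite size_iota size_map -cardE.
have : k \in s1 by rewrite (uniq_min_size u1 sub1 sz).2 mem_iota add0n hk.
by case/mapP => e; rewrite mem_enum inE => /eqP re ->; exists e.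
Qed.

Lemma inl_eq (A B : eqType) (a b : A) : (inl a == inl b :> A + B) = (a == b).
Proof. by apply/eqP/eqP => [[]|->]. Qed.
Lemma inr_eq (A B : eqType) (a b : B) : (inr a == inr b :> A + B) = (a == b).
Proof. by apply/eqP/eqP => [[]|->]. Qed.
Lemma inr_inl_eq (A B : eqType) (a : A) (b : B) : (inr b == inl a :> A + B) = false.
Proof. by apply/eqP. Qed.
Lemma inl_inr_eq (A B : eqType) (a : A) (b : B) : (inl a == inr b :> A + B) = false.
Proof. by apply/eqP. Qed.

Lemma indeg2 (V E : finType) (r : E -> V) (idx : E -> nat) :
  (forall v : V, 2 <= indeg r v) ->
  (forall e, idx e < indeg r (r e)) ->
  (forall e1 e2, r e1 = r e2 -> idx e1 = idx e2 -> e1 = e2) ->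
  forall x : lagV r, #|[pred y : lagE r | lag_r r idx y == x]| = 2.
Proof.
move=> h2 hlt hinj [v k].
have hsurj := idx_surj hlt hinj.
have eqx : forall y : lagE r, (lag_r r idx y == existT _ v k) =
    (Rc r idx (codeE y) == (v, nat_of_ord k)).
  by move=> y; rewrite -(inj_eq (@codeV_inj _ _ r)) codeV_r.
have dm : indeg r v = (indeg r v - 2).+2 by rewrite -addn2 subnK.
have := ltn_ord k; rewrite ltnS leq_eqVlt => /orP[/eqP km | km].
- have l1 : indeg r v - 2 < indeg r v by rewrite {2}dm ltnS leqnSn.
  have l2 : (indeg r v - 2).+1 < indeg r v by rewrite {2}dm.
  have [e1 [r1 i1]] := hsurj v _ l1.
  have [e2 [r2 i2]] := hsurj v _ l2.
  have ne : inl e1 != inl e2 :> lagE r.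
    by apply/eqP => -[h]; move: i2; rewrite -h i1 => /n_Sn.
  transitivity #|pred2 (inl e1 : lagE r) (inl e2)|; last by rewrite card2 ne.
  apply: eq_card => y.
  rewrite inE eqx /= !inE -!(inj_eq (@codeE_inj _ _ r)) /=.
  case: y => [e | [w i]] /=.
  + rewrite km xpair_eqE !inl_eq; apply/idP/idP.
    * case/andP => /eqP re /eqP hm; rewrite re in hm.
      have : indeg r v - 2 <= idx e by rewrite -hm geq_minl.
      rewrite leq_eqVlt => /orP[/eqP he | he].
        have -> : e = e1 by apply: hinj; rewrite ?re ?r1 ?i1.
        by rewrite eqxx.
      have : idx e = (indeg r v - 2).+1.
        by apply/eqP; rewrite eqn_leq he -ltnS -dm -re hlt.
      move=> he'; have -> : e = e2 by apply: hinj; rewrite ?re ?r2 ?i2.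
      by rewrite eqxx orbT.
    * case/orP => /eqP ->; rewrite ?r1 ?r2 ?i1 ?i2 eqxx /=.
        by rewrite minnn.
      by apply/eqP/minn_idPr; apply: leqnSn.
  + rewrite inr_inl_eq; apply/negP => /eqP [ew ei]; move: (ltn_ord i); rewrite ei km ew ltnn.
    done.
- have l0 : k < indeg r v by apply: leq_trans km (leq_subr _ _).
  have [e0 [r0 i0]] := hsurj v k l0.
  pose y0 : lagE r := inr (existT (fun v => 'I_(indeg r v - 2)) v (Ordinal km)).
  have ne : inl e0 != y0 by [].
  transitivity #|pred2 (inl e0 : lagE r) y0|; last by rewrite card2 ne.
  apply: eq_card => y.
  rewrite inE eqx /= !inE -!(inj_eq (@codeE_inj _ _ r)) /=.
  case: y => [e | [w i]] /=.
  + rewrite inl_eq inl_inr_eq orbF xpair_eqE; apply/idP/idP.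
    * case/andP => /eqP re /eqP hm; rewrite re in hm.
      have he : idx e = k.
        move: hm; rewrite /minn; case: ltnP => // _ hm'.
        by have := km; rewrite -hm' ltnn.
      by have -> : e = e0 by apply: hinj; rewrite ?re ?r0 ?i0.
    * move/eqP => ->; rewrite r0 i0 eqxx /=.
      by apply/eqP/minn_idPl/ltnW.
  + by rewrite inr_eq.
Qed.

Lemma map_theta (V E : finType) (r : E -> V) idx d :
  map (@codeE V E r) (flatten (map (theta_edge r idx) d)) = flatten (map (thetaC r idx) d).
Proof.
rewrite map_flatten -map_comp; congr flatten; apply: eq_map => e /=; exact: theta_code.
Qed.

Lemma decodeC (V E : finType) (r : E -> V) idx d :
  pmap (@getl _ _) (flatten (map (thetaC r idx) d)) = d.
Proof.
elim: d => [|e d IH] //=; rewrite pmap_cat IH /thetaC pmap_cat /=.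
by elim: (iota _ _) => [|i l IHl] //=.
Qed.

Lemma codeV_emb (V E : finType) (r : E -> V) u : codeV (lag_emb r u) = (u, 0).
Proof. by []. Qed.

Theorem corollary3p8 (V E : finType) (r s : E -> V) (idx : E -> nat) :
  transitive_graph r s ->
  (forall v : V, 2 <= indeg r v) ->
  (* idx enumerates, for each v, the edges with range v as 0, ..., d_v - 1 *)
  (forall e, idx e < indeg r (r e)) ->
  (forall e1 e2, r e1 = r e2 -> idx e1 = idx e2 -> e1 = e2) ->
  (* \hat G is in-degree 2-regular *)
  (forall x : lagV r, #|[pred y : lagE r | lag_r r idx y == x]| = 2) /\
  (* the embedding V -> \hat V *)
  injective (@lag_emb V E r) /\
  (* theta maps paths of G to paths of \hat G with range and source in V *)
  (forall p, is_gpath r s p ->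
     is_gpath (lag_r r idx) (lag_s r s) (theta r idx p) /\
     prange (theta r idx p) = lag_emb r (prange p) /\
     psource (lag_s r s) (theta r idx p) = lag_emb r (psource s p)) /\
  (* theta is injective on paths of G *)
  (forall p1 p2, is_gpath r s p1 -> is_gpath r s p2 ->
     theta r idx p1 = theta r idx p2 -> p1 = p2) /\
  (* theta is onto the paths of \hat G with range and source in V *)
  (forall q, is_gpath (lag_r r idx) (lag_s r s) q ->
     (exists u, prange q = lag_emb r u) ->
     (exists w, psource (lag_s r s) q = lag_emb r w) ->
     exists2 p, is_gpath r s p & theta r idx p = q).
Proof.
move=> _ h2 hlt hinj.
split; first exact: indeg2.
split.
  by move=> u1 u2 /(congr1 (@codeV _ _ r)) [].
split.
  case=> u d h; rewrite /theta /=.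
  have [f1 f2] := forward idx h.
  split; first by rewrite gpath_code codeV_emb map_theta.
  split => //.
  by apply: (@codeV_inj _ _ r); rewrite psource_code codeV_emb map_theta f2.
split.
  case=> u1 d1 [u2 d2] _ _; rewrite /theta /= => -[-> hd].
  have := congr1 (fun l => pmap (@getl _ _) (map (@codeE _ _ r) l)) hd.
  by rewrite /= !map_theta !decodeC => ->.
case=> x l gq [u /= hu] [w hw].
move: gq; rewrite gpath_code hu codeV_emb => gq.
have := congr1 (@codeV _ _ r) hw; rewrite psource_code hu codeV_emb => hs.
have hs0 : (psource (Sc s) ((u, 0), map (@codeE _ _ r) l)).2 = 0 by rewrite hs.
have [g1 [g2 _]] := backward gq hs0.
exists (u, pmap (@getl _ _) (map (@codeE _ _ r) l)) => //.
rewrite /theta /=; congr pair.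
apply: (inj_map (@codeE_inj V E r)); rewrite map_theta.
by rewrite drop0 in g2; rewrite -g2.
Qed.
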